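(* Let $D$ be a finite strongly loopless category. Then the natural functor $j_D:\overline{\mathrm{Pro}}(\mathcal{C}^D) \to \overline{\mathrm{Pro}}(\mathcal{C})^{D}$ is an equivalence of categories; an explicit inverse equivalence $h_D:\overline{\mathrm{Pro}}(\mathcal{C})^{D}\to\overline{\mathrm{Pro}}(\mathcal{C}^D)$ is constructed.
   Context: A category $D$ is loopless if $Mor_D(d,d)=\{id_d\}$ for every object $d$, and strongly loopless if moreover only equal objects are isomorphic (e.g. $\Delta^n$). $\overline{\mathrm{Pro}}(\mathcal{C})$ has objects diagrams $F:A\to\mathcal{C}$ with $A$ a cofinite directed poset of infinite height (poset as category with $u\to v$ iff $u\ge v$), and morphisms $F^A\to G^B$ the classes $[\alpha,\phi]$ of pairs with $\alpha:B\to A$ strictly increasing and $\phi:F\circ\alpha\to G$ natural, identified along chains of relations $(\alpha',\phi')\ge(\alpha,\phi)$ ($\alpha'\ge\alpha$ pointwise and $\phi'_b=\phi_b\circ F(\alpha'(b)\to\alpha(b))$). The functor $j_D$ sends $X:A\to\mathcal{C}^D$ (viewed as $A\times D\to\mathcal{C}$) to $d\mapsto X(-,d)$ and $[\alpha,\phi]$ to the natural transformation with components $[\alpha,\phi(-,d)]$. *)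

(* Defs.v *)
From Stdlib Require Import List Relation_Operators.

Set Implicit Arguments.
Unset Strict Implicit.

Record Cat := {
  cobj :> Type;
  chom : cobj -> cobj -> Type;
  cid : forall a, chom a a;
  ccomp : forall a b e, chom b e -> chom a b -> chom a e;   (* ccomp g f = g o f *)
  ccomp_id_l : forall a b (f : chom a b), ccomp (cid b) f = f;
  ccomp_id_r : forall a b (f : chom a b), ccomp f (cid a) = f;
  ccomp_assoc : forall a b e x (f : chom a b) (g : chom b e) (h : chom e x),
      ccomp h (ccomp g f) = ccomp (ccomp h g) f
}.
Arguments chom : clear implicits.
Arguments cid {c} a.
Arguments ccomp {c a b e} _ _.

Definition FiniteCat (D : Cat) : Prop :=
  (exists l : list (cobj D), forall x, In x l) /\
  (forall a b : cobj D, exists l : list (chom D a b), forall f, In f l).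

Definition Loopless (D : Cat) : Prop :=
  forall (d : cobj D) (f : chom D d d), f = cid d.

Definition Isomorphic (D : Cat) (a b : cobj D) : Prop :=
  exists (f : chom D a b) (g : chom D b a), ccomp g f = cid a /\ ccomp f g = cid b.

Definition StronglyLoopless (D : Cat) : Prop :=
  Loopless D /\ forall a b : cobj D, Isomorphic a b -> a = b.

Record DirPoset := {
  pcar : Type;
  ple : pcar -> pcar -> Prop;
  ple_refl : forall u, ple u u;
  ple_trans : forall u v w, ple u v -> ple v w -> ple u w;
  ple_antisym : forall u v, ple u v -> ple v u -> u = v;
  pcofinite : forall u, exists l : list pcar, forall v, ple v u -> In v l;
  pdirected : forall u v, exists w, ple u w /\ ple v w;
  pinf_height : forall n : nat, exists c : nat -> pcar,
      forall i, i < n -> ple (c i) (c (S i)) /\ c i <> c (S i)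
}.

Arguments ple : clear implicits.
Definition plt (P : DirPoset) (u v : pcar P) : Prop := ple P u v /\ u <> v.

(* ---------- Categories whose morphisms are representatives modulo a relation ----
   Objects/morphisms are those satisfying the validity predicates; morphisms
   are identified along [sheq]. *)
Record SCat := {
  sobj : Type;
  sobj_ok : sobj -> Prop;
  shom : sobj -> sobj -> Type;
  shom_ok : forall a b, shom a b -> Prop;
  sheq : forall a b, shom a b -> shom a b -> Prop;
  sid : forall a, shom a a;
  scomp : forall a b e, shom b e -> shom a b -> shom a e
}.
Arguments shom : clear implicits.
Arguments sobj_ok {s} _.
Arguments shom_ok {s a b} _.
Arguments sheq {s a b} _ _.
Arguments sid {s} a.
Arguments scomp {s a b e} _ _.

Definition IsFunctor (E F : SCat) (fo : sobj E -> sobj F)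
  (fm : forall a b, shom E a b -> shom F (fo a) (fo b)) : Prop :=
  (forall a, sobj_ok a -> sobj_ok (fo a)) /\
  (forall a b (f : shom E a b), sobj_ok a -> sobj_ok b -> shom_ok f -> shom_ok (fm a b f)) /\
  (forall a b (f g : shom E a b), sobj_ok a -> sobj_ok b -> shom_ok f -> shom_ok g ->
      sheq f g -> sheq (fm a b f) (fm a b g)) /\
  (forall a, sobj_ok a -> sheq (fm a a (sid a)) (sid (fo a))) /\
  (forall a b c (f : shom E a b) (g : shom E b c), sobj_ok a -> sobj_ok b -> sobj_ok c ->
      shom_ok f -> shom_ok g -> sheq (fm a c (scomp g f)) (scomp (fm b c g) (fm a b f))).

Arguments IsFunctor : clear implicits.

Definition NatIso (A B : SCat) (P Q : sobj A -> sobj B)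
  (Pm : forall a b, shom A a b -> shom B (P a) (P b))
  (Qm : forall a b, shom A a b -> shom B (Q a) (Q b)) : Prop :=
  exists (eta : forall x, shom B (P x) (Q x)) (theta : forall x, shom B (Q x) (P x)),
    (forall x, sobj_ok x -> shom_ok (eta x) /\ shom_ok (theta x) /\
        sheq (scomp (theta x) (eta x)) (sid (P x)) /\
        sheq (scomp (eta x) (theta x)) (sid (Q x))) /\
    (forall x y (f : shom A x y), sobj_ok x -> sobj_ok y -> shom_ok f ->
        sheq (scomp (Qm x y f) (eta x)) (scomp (eta y) (Pm x y f))).

Arguments NatIso : clear implicits.

Definition IsEquivalence (E F : SCat) (jo : sobj E -> sobj F)
  (jm : forall a b, shom E a b -> shom F (jo a) (jo b)) : Prop :=
  IsFunctor E F jo jm /\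
  exists (ho : sobj F -> sobj E) (hm : forall a b, shom F a b -> shom E (ho a) (ho b)),
    IsFunctor F E ho hm /\
    NatIso E E (fun x => ho (jo x)) (fun x => x)
           (fun a b f => hm _ _ (jm a b f)) (fun a b f => f) /\
    NatIso F F (fun y => jo (ho y)) (fun y => y)
           (fun a b f => jm _ _ (hm a b f)) (fun a b f => f).
Arguments IsEquivalence : clear implicits.

Record FunObj (D : Cat) (E : SCat) := {
  fo : cobj D -> sobj E;
  fm : forall d d', chom D d d' -> shom E (fo d) (fo d')
}.
Arguments fo {D E} _ _.
Arguments fm {D E} _ {_ _} _.

Definition FunObj_ok D E (X : FunObj D E) : Prop :=
  (forall d, sobj_ok (fo X d)) /\
  (forall d d' (f : chom D d d'), shom_ok (fm X f)) /\
  (forall d, sheq (fm X (cid d)) (sid (fo X d))) /\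
  (forall d d' d'' (f : chom D d d') (g : chom D d' d''),
      sheq (fm X (ccomp g f)) (scomp (fm X g) (fm X f))).

Definition FunHom D E (X Y : FunObj D E) := forall d, shom E (fo X d) (fo Y d).

Definition FunHom_ok D E (X Y : FunObj D E) (eta : FunHom X Y) : Prop :=
  (forall d, shom_ok (eta d)) /\
  (forall d d' (f : chom D d d'), sheq (scomp (fm Y f) (eta d)) (scomp (eta d') (fm X f))).

Definition FunCat (D : Cat) (E : SCat) : SCat := {|
  sobj := FunObj D E;
  sobj_ok := @FunObj_ok D E;
  shom := @FunHom D E;
  shom_ok := @FunHom_ok D E;
  sheq := fun X Y (e1 e2 : FunHom X Y) => forall d, sheq (e1 d) (e2 d);
  sid := fun X d => sid (fo X d);
  scomp := fun X Y Z (e2 : FunHom Y Z) (e1 : FunHom X Y) d => scomp (e2 d) (e1 d)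
|}.

Record ProObj (C : Cat) := {
  pidx : DirPoset;
  pdiag : pcar pidx -> cobj C;
  (* u -> v iff u >= v *)
  pmap : forall u v : pcar pidx, ple pidx v u -> chom C (pdiag u) (pdiag v)
}.
Arguments pidx {C} _.
Arguments pdiag {C} _ _.
Arguments pmap {C} _ _ _ _.

Definition ProObj_ok C (X : ProObj C) : Prop :=
  (forall u (h : ple _ u u), pmap X u u h = cid (pdiag X u)) /\
  (forall u v w (h1 : ple _ v u) (h2 : ple _ w v) (h3 : ple _ w u),
      ccomp (pmap X v w h2) (pmap X u v h1) = pmap X u w h3).

Record ProHom C (X Y : ProObj C) := {
  palpha : pcar (pidx Y) -> pcar (pidx X);
  pphi : forall b, chom C (pdiag X (palpha b)) (pdiag Y b)
}.
Arguments palpha {C _ Y} _ _.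
Arguments pphi {C _ Y} _ _.

Definition ProHom_ok C (X Y : ProObj C) (p : ProHom X Y) : Prop :=
  (forall b b', plt b b' -> plt (palpha p b) (palpha p b')) /\
  (forall b b' (h : ple _ b' b) (h' : ple _ (palpha p b') (palpha p b)),
      ccomp (pmap Y b b' h) (pphi p b) = ccomp (pphi p b') (pmap X _ _ h')).

Definition ProHom_ge C (X Y : ProObj C) (p' p : ProHom X Y) : Prop :=
  (forall b, ple _ (palpha p b) (palpha p' b)) /\
  (forall b (h : ple _ (palpha p b) (palpha p' b)),
      pphi p' b = ccomp (pphi p b) (pmap X _ _ h)).

Definition ProHom_eq C (X Y : ProObj C) : ProHom X Y -> ProHom X Y -> Prop :=
  clos_refl_sym_trans _
    (fun p' p => ProHom_ok p' /\ ProHom_ok p /\ ProHom_ge p' p).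

Definition ProHom_id C (X : ProObj C) : ProHom X X :=
  {| palpha := fun b => b; pphi := fun b => cid (pdiag X b) |}.

Definition ProHom_comp C (X Y Z : ProObj C) (q : ProHom Y Z) (p : ProHom X Y) : ProHom X Z :=
  {| palpha := fun c => palpha p (palpha q c);
     pphi := fun c => ccomp (pphi q c) (pphi p (palpha q c)) |}.

Definition ProCat (C : Cat) : SCat := {|
  sobj := ProObj C;
  sobj_ok := @ProObj_ok C;
  shom := @ProHom C;
  shom_ok := @ProHom_ok C;
  sheq := @ProHom_eq C;
  sid := @ProHom_id C;
  scomp := @ProHom_comp C
|}.

(* ---------- \overline{Pro}(C^D): diagrams A -> C^D viewed as A x D -> C ---------- *)
Record ProDObj (C D : Cat) := {
  qidx : DirPoset;
  qdiag : pcar qidx -> cobj D -> cobj C;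
  qmap : forall (u v : pcar qidx), ple qidx v u ->
         forall d d' : cobj D, chom D d d' -> chom C (qdiag u d) (qdiag v d')
}.
Arguments qidx {C D} _.
Arguments qdiag {C D} _ _ _.
Arguments qmap {C D} _ _ _ _ _ _ _.

Definition ProDObj_ok C D (X : ProDObj C D) : Prop :=
  (forall u (h : ple _ u u) d, qmap X u u h d d (cid d) = cid (qdiag X u d)) /\
  (forall u v w (h1 : ple _ v u) (h2 : ple _ w v) (h3 : ple _ w u)
          d d' d'' (f : chom D d d') (g : chom D d' d''),
      ccomp (qmap X v w h2 d' d'' g) (qmap X u v h1 d d' f) = qmap X u w h3 d d'' (ccomp g f)).

Record ProDHom C D (X Y : ProDObj C D) := {
  qalpha : pcar (qidx Y) -> pcar (qidx X);
  qphi : forall b d, chom C (qdiag X (qalpha b) d) (qdiag Y b d)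
}.
Arguments qalpha {C D _ Y} _ _.
Arguments qphi {C D _ Y} _ _ _.

Definition ProDHom_ok C D (X Y : ProDObj C D) (p : ProDHom X Y) : Prop :=
  (forall b b', plt b b' -> plt (qalpha p b) (qalpha p b')) /\
  (forall b b' (h : ple _ b' b) (h' : ple _ (qalpha p b') (qalpha p b))
          d d' (f : chom D d d'),
      ccomp (qmap Y b b' h d d' f) (qphi p b d)
      = ccomp (qphi p b' d') (qmap X _ _ h' d d' f)).

Definition ProDHom_ge C D (X Y : ProDObj C D) (p' p : ProDHom X Y) : Prop :=
  (forall b, ple _ (qalpha p b) (qalpha p' b)) /\
  (forall b (h : ple _ (qalpha p b) (qalpha p' b)) d,
      qphi p' b d = ccomp (qphi p b d) (qmap X _ _ h d d (cid d))).

Definition ProDHom_eq C D (X Y : ProDObj C D) : ProDHom X Y -> ProDHom X Y -> Prop :=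
  clos_refl_sym_trans _
    (fun p' p => ProDHom_ok p' /\ ProDHom_ok p /\ ProDHom_ge p' p).

Definition ProDHom_id C D (X : ProDObj C D) : ProDHom X X :=
  {| qalpha := fun b => b; qphi := fun b d => cid (qdiag X b d) |}.

Definition ProDHom_comp C D (X Y Z : ProDObj C D) (q : ProDHom Y Z) (p : ProDHom X Y)
  : ProDHom X Z :=
  {| qalpha := fun c => qalpha p (qalpha q c);
     qphi := fun c d => ccomp (qphi q c d) (qphi p (qalpha q c) d) |}.

Definition ProDCat (C D : Cat) : SCat := {|
  sobj := ProDObj C D;
  sobj_ok := @ProDObj_ok C D;
  shom := @ProDHom C D;
  shom_ok := @ProDHom_ok C D;
  sheq := @ProDHom_eq C D;
  sid := @ProDHom_id C D;
  scomp := @ProDHom_comp C D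
|}.

Definition jD_at C D (X : ProDObj C D) (d : cobj D) : ProObj C := {|
  pidx := qidx X;
  pdiag := fun u => qdiag X u d;
  pmap := fun u v h => qmap X u v h d d (cid d)
|}.

Definition jD_atmor C D (X : ProDObj C D) (d d' : cobj D) (f : chom D d d')
  : ProHom (jD_at X d) (jD_at X d') :=
  @Build_ProHom C (jD_at X d) (jD_at X d') (fun u : pcar (qidx X) => u)
     (fun u : pcar (qidx X) => qmap X u u (@ple_refl (qidx X) u) d d' f).

Definition jD_obj C D (X : ProDObj C D) : sobj (FunCat D (ProCat C)) :=
  @Build_FunObj D (ProCat C) (jD_at X) (@jD_atmor C D X).

Definition jD_mor C D (X Y : ProDObj C D) (p : ProDHom X Y)
  : shom (FunCat D (ProCat C)) (jD_obj X) (jD_obj Y) :=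
  fun d => @Build_ProHom C (jD_at X d) (jD_at Y d) (qalpha p)
              (fun b : pcar (qidx Y) => qphi p b d).

(* Main.v *)
Require Import Defs.
From Stdlib Require Import List Relation_Operators Classical ClassicalEpsilon
  FunctionalExtensionality ProofIrrelevance Arith Lia Wellfounded.
Import ListNotations.

Set Implicit Arguments.
Unset Strict Implicit.

Definition xm (P : Prop) : {P} + {~ P} := excluded_middle_informative P.

Section Poset.
Variable P : DirPoset.
Notation le := (ple P).

Lemma le_lt_or_eq (u v : pcar P) : le u v -> plt u v \/ u = v.
Proof. intros H. destruct (classic (u = v)); [right|left]; auto. split; auto. Qed.

Lemma lt_trans (u v w : pcar P) : plt u v -> plt v w -> plt u w.
Proof.
  intros [H1 N1] [H2 N2]. split. eapply ple_trans; eauto.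
  intro E; subst. apply N1. apply ple_antisym; auto.
Qed.

Lemma lt_le_trans (u v w : pcar P) : plt u v -> le v w -> plt u w.
Proof.
  intros H1 H2. destruct (le_lt_or_eq H2) as [H|H]. eapply lt_trans; eauto. subst; auto.
Qed.

Lemma le_lt_trans (u v w : pcar P) : le u v -> plt v w -> plt u w.
Proof.
  intros H1 H2. destruct (le_lt_or_eq H1) as [H|H]. eapply lt_trans; eauto. subst; auto.
Qed.

Lemma inhab : pcar P.
Proof. destruct (constructive_indefinite_description _ (pinf_height P 0)) as [c _]. exact (c 0). Qed.

Lemma exists_ub (l : list (pcar P)) : exists w, forall x, In x l -> le x w.
Proof.
  induction l as [|a l [w Hw]].
  - exists inhab. simpl; tauto.
  - destruct (pdirected a w) as [z [H1 H2]]. exists z. simpl. intros x [->|Hx]; auto.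
    eapply ple_trans; eauto.
Qed.

Lemma chain_lt (c : nat -> pcar P) n :
  (forall i, i < n -> le (c i) (c (S i)) /\ c i <> c (S i)) ->
  forall i j, i < j -> j <= n -> plt (c i) (c j).
Proof.
  intros Hc i j Hij. induction Hij as [|j Hij IH]; intros Hj.
  - split; apply Hc; lia.
  - eapply lt_trans. apply IH; lia. split; apply Hc; lia.
Qed.

Lemma exists_above (l : list (pcar P)) : exists z, forall x, In x l -> plt x z.
Proof.
  destruct (exists_ub l) as [w Hw].
  destruct (pcofinite w) as [lw Hlw].
  destruct (pinf_height P (length lw)) as [c Hc].
  destruct (pdirected w (c (length lw))) as [z [Hwz Hcz]].
  set (n := length lw) in *.
  assert (Hlt := chain_lt Hc).
  assert (ND : forall m k, k + m <= S n -> NoDup (map c (seq k m))).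
  { induction m; intros k Hk; simpl. constructor. constructor.
    - intro Hin. apply in_map_iff in Hin. destruct Hin as [j [Ej Hj]].
      apply in_seq in Hj. destruct (Hlt k j ltac:(lia) ltac:(lia)) as [_ N]. auto.
    - apply IHm. lia. }
  assert (Hzw : z <> w).
  { intro E; subst z.
    assert (Hinc : incl (map c (seq 0 (S n))) lw).
    { intros x Hx. apply in_map_iff in Hx. destruct Hx as [j [<- Hj]]. apply in_seq in Hj.
      apply Hlw. eapply ple_trans; [|exact Hcz].
      destruct (Nat.eq_dec j n) as [->|Hjn]. apply ple_refl.
      apply (Hlt j n); lia. }
    pose proof (NoDup_incl_length (ND (S n) 0 ltac:(lia)) Hinc) as HL.
    rewrite length_map, length_seq in HL. fold n in HL. lia. }
  exists z. intros x Hx. split. eapply ple_trans; eauto.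
  intro E; subst. apply Hzw. apply ple_antisym; auto.
Qed.

Lemma wf_lt : well_founded (plt (P:=P)).
Proof.
  assert (H : forall n u, (forall l, NoDup l -> (forall v, In v l -> le v u) -> length l <= n) ->
                Acc (plt (P:=P)) u).
  { induction n; intros u Hu.
    - exfalso. specialize (Hu [u] ltac:(repeat constructor; simpl; tauto)).
      simpl in Hu. assert (1 <= 0) by (apply Hu; intros v [<-|[]]; apply ple_refl). lia.
    - constructor. intros v [Hvu Nvu]. apply IHn. intros l ND Hl.
      assert (Hnin : ~ In u l).
      { intro Hin. apply Nvu. apply ple_antisym; auto. }
      specialize (Hu (u :: l)). simpl in Hu.
      assert (S (length l) <= S n). apply Hu. constructor; auto.
      intros x [<-|Hx]. apply ple_refl. eapply ple_trans; eauto. lia. }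
  intro u. destruct (pcofinite u) as [lu Hlu]. apply (H (length lu)).
  intros l ND Hl. apply NoDup_incl_length; auto. intros x Hx; auto.
Qed.

End Poset.

Definition abv (A : DirPoset) (l : list (pcar A)) : pcar A :=
  proj1_sig (constructive_indefinite_description _ (exists_above l)).
Lemma abv_spec (A : DirPoset) (l : list (pcar A)) x : In x l -> plt x (abv l).
Proof. unfold abv. destruct (constructive_indefinite_description _ _) as [z Hz]; simpl; auto. Qed.
Lemma abv_le (A : DirPoset) (l : list (pcar A)) x : In x l -> ple A x (abv l).
Proof. intro H. apply (abv_spec H). Qed.

Definition predlist (B : DirPoset) (b : pcar B) : list (pcar B) :=
  proj1_sig (constructive_indefinite_description _ (pcofinite b)).
Lemma predlist_spec (B : DirPoset) (b v : pcar B) : ple B v b -> In v (predlist b).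
Proof. unfold predlist. destruct (constructive_indefinite_description _ _) as [z Hz]; simpl; auto. Qed.

Definition SIncr (B A : DirPoset) (g : pcar B -> pcar A) : Prop :=
  forall b b', plt b b' -> plt (g b) (g b').

Lemma SIncr_mono (B A : DirPoset) (g : pcar B -> pcar A) :
  SIncr g -> forall b b', ple B b b' -> ple A (g b) (g b').
Proof.
  intros H b b' Hb. destruct (le_lt_or_eq Hb) as [Hl|<-]. apply (H _ _ Hl). apply ple_refl.
Qed.

Section UBF.
Variables (B A : DirPoset) (F : pcar B -> list (pcar A)).

Definition ubstep (b : pcar B) (rec : forall v, plt v b -> pcar A) : pcar A :=
  abv (F b ++ flat_map (fun v => match xm (plt v b) with left H => [rec v H] | right _ => [] end)
                 (predlist b)).

Definition ubf : pcar B -> pcar A := Fix (@wf_lt B) (fun _ => pcar A) ubstep.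

Lemma ubf_eq b : ubf b = @ubstep b (fun v _ => ubf v).
Proof.
  unfold ubf. rewrite Fix_eq. reflexivity.
  intros x f g Hfg. assert (f = g) as ->; auto.
  apply functional_extensionality_dep; intro y. apply functional_extensionality_dep; intro p. auto.
Qed.

Lemma ubf_ge b x : In x (F b) -> ple A x (ubf b).
Proof. intro H. rewrite ubf_eq. apply abv_le. apply in_or_app; auto. Qed.

Lemma ubf_SIncr : SIncr ubf.
Proof.
  intros b' b H. rewrite (ubf_eq b). apply abv_spec. apply in_or_app; right.
  apply in_flat_map. exists b'. split. apply predlist_spec, H.
  destruct (xm (plt b' b)) as [H'|N]. simpl; auto. contradiction.
Qed.
End UBF.

Set Implicit Arguments.
Unset Strict Implicit.

Record Laws (E : SCat) : Prop := {
 L_refl : forall a b (f : shom E a b), sheq f f;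
 L_sym : forall a b (f g : shom E a b), sheq f g -> sheq g f;
 L_trans : forall a b (f g h : shom E a b), sheq f g -> sheq g h -> sheq f h;
 L_idok : forall a : sobj E, sobj_ok a -> shom_ok (sid a);
 L_compok : forall a b c (f : shom E a b) (g : shom E b c), sobj_ok a -> sobj_ok b -> sobj_ok c ->
   shom_ok f -> shom_ok g -> shom_ok (scomp g f);
 L_cong : forall a b c (f f' : shom E a b) (g g' : shom E b c), sobj_ok a -> sobj_ok b -> sobj_ok c ->
   shom_ok f -> shom_ok f' -> shom_ok g -> shom_ok g' -> sheq f f' -> sheq g g' ->
   sheq (scomp g f) (scomp g' f');
 L_assoc : forall a b c e (f : shom E a b) (g : shom E b c) (h : shom E c e),
   sobj_ok a -> sobj_ok b -> sobj_ok c -> sobj_ok e -> shom_ok f -> shom_ok g -> shom_ok h ->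
   sheq (scomp h (scomp g f)) (scomp (scomp h g) f);
 L_idl : forall a b (f : shom E a b), sobj_ok a -> sobj_ok b -> shom_ok f -> sheq (scomp (sid b) f) f;
 L_idr : forall a b (f : shom E a b), sobj_ok a -> sobj_ok b -> shom_ok f -> sheq (scomp f (sid a)) f
}.

Section ProL.
Variable C : Cat.

Lemma pmap_pi (X : ProObj C) u v h1 h2 : pmap X u v h1 = pmap X u v h2.
Proof. rewrite (proof_irrelevance _ h1 h2). reflexivity. Qed.

Lemma pmap_cc (X : ProObj C) (HX : ProObj_ok X) u v w h1 h2 h3 :
  ccomp (pmap X v w h2) (pmap X u v h1) = pmap X u w h3.
Proof. apply HX. Qed.

Lemma pmap_cc_r (X : ProObj C) (HX : ProObj_ok X) u v w h1 h2 h3 e (k : chom C e _) :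
  ccomp (pmap X v w h2) (ccomp (pmap X u v h1) k) = ccomp (pmap X u w h3) k.
Proof. rewrite ccomp_assoc. f_equal. apply HX. Qed.

Lemma pmap_id (X : ProObj C) (HX : ProObj_ok X) u h : pmap X u u h = cid _.
Proof. apply HX. Qed.

Lemma prohom_ext (X Y : ProObj C) (a : pcar (pidx Y) -> pcar (pidx X))
  (f g : forall b, chom C (pdiag X (a b)) (pdiag Y b)) :
  (forall b, f b = g b) -> Build_ProHom (palpha:=a) f = Build_ProHom (palpha:=a) g.
Proof. intro H. f_equal. apply functional_extensionality_dep; auto. Qed.

Definition UB (X Y : ProObj C) (p q : ProHom X Y) : Prop :=
  exists r, ProHom_ge r p /\ ProHom_ge r q.

Lemma ge_refl (X Y : ProObj C) (HX : ProObj_ok X) (p : ProHom X Y) : ProHom_ge p p.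
Proof. split. intro; apply ple_refl. intros b h. rewrite pmap_id, ccomp_id_r; auto. Qed.

Lemma ge_trans (X Y : ProObj C) (HX : ProObj_ok X) (r q p : ProHom X Y) :
  ProHom_ge r q -> ProHom_ge q p -> ProHom_ge r p.
Proof.
  intros [A1 B1] [A2 B2]. split. intro b; eapply ple_trans; eauto.
  intros b h. rewrite (B1 b (A1 b)), (B2 b (A2 b)).
  rewrite <- ccomp_assoc. f_equal. apply HX.
Qed.

Definition lift (X Y : ProObj C) (q : ProHom X Y) (g : pcar (pidx Y) -> pcar (pidx X))
  (Hg : forall b, ple _ (palpha q b) (g b)) : ProHom X Y :=
  Build_ProHom (palpha := g) (fun b => ccomp (pphi q b) (pmap X (g b) (palpha q b) (Hg b))).
Arguments lift {X Y} q g Hg.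

Lemma lift_ge (X Y : ProObj C) (HX : ProObj_ok X) (q : ProHom X Y) g Hg r :
  ProHom_ge r q -> (forall b, ple _ (palpha r b) (g b)) -> ProHom_ge (lift q g Hg) r.
Proof.
  intros [A1 B1] Hr. split; auto. intros b h. simpl. rewrite (B1 b (A1 b)).
  rewrite <- ccomp_assoc. f_equal. symmetry. apply HX.
Qed.

Lemma ok_mono (X Y : ProObj C) (p : ProHom X Y) : ProHom_ok p ->
  forall b b', ple _ b b' -> ple _ (palpha p b) (palpha p b').
Proof. intros [H _]. apply (SIncr_mono (g := palpha p)). exact H. Qed.

Lemma lift_ok (X Y : ProObj C) (HX : ProObj_ok X) (q : ProHom X Y) g Hg :
  ProHom_ok q -> SIncr g -> ProHom_ok (lift q g Hg).
Proof.
  intros Hq Hg'. split; auto. intros b b' h h'. simpl.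
  rewrite ccomp_assoc. destruct Hq as [Hq1 Hq2].
  rewrite (Hq2 b b' h (ok_mono (conj Hq1 Hq2) h)).
  rewrite <- !ccomp_assoc. f_equal. rewrite !pmap_cc with (h3 := ple_trans (Hg b') h'); auto.
Qed.

Lemma ub_eq (X Y : ProObj C) (HX : ProObj_ok X) (p q : ProHom X Y) :
  ProHom_ok p -> ProHom_ok q -> UB p q -> ProHom_eq p q.
Proof.
  intros Hp Hq [r [Hrp Hrq]].
  set (g := ubf (fun b => [palpha r b])).
  assert (Hgr : forall b, ple _ (palpha r b) (g b)) by (intro b; apply ubf_ge; simpl; auto).
  assert (Hg : forall b, ple _ (palpha p b) (g b)) by (intro b; eapply ple_trans; [apply Hrp|apply Hgr]).
  set (s := lift p g Hg).
  assert (Hs : ProHom_ok s) by (apply lift_ok; auto; apply ubf_SIncr).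
  assert (Hsr : ProHom_ge s r) by (apply lift_ge; auto).
  apply rst_trans with s.
  - apply rst_sym, rst_step. split; auto. split; auto. eapply ge_trans; eauto.
  - apply rst_step. split; auto. split; auto. eapply ge_trans; eauto.
Qed.

Lemma ub_trans (X Y : ProObj C) (HX : ProObj_ok X) (p q t : ProHom X Y) :
  UB p q -> UB q t -> UB p t.
Proof.
  intros [r1 [H1 H2]] [r2 [H3 H4]].
  set (g := ubf (fun b => [palpha r1 b; palpha r2 b])).
  assert (G1 : forall b, ple _ (palpha r1 b) (g b)) by (intro b; apply ubf_ge; simpl; auto).
  assert (G2 : forall b, ple _ (palpha r2 b) (g b)) by (intro b; apply ubf_ge; simpl; auto).
  assert (Hg : forall b, ple _ (palpha q b) (g b)) by (intro b; eapply ple_trans; [apply H2|apply G1]).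
  exists (lift q g Hg). split.
  - eapply ge_trans; eauto. apply lift_ge; auto.
  - eapply ge_trans; eauto. apply lift_ge; auto.
Qed.

Lemma eq_ub (X Y : ProObj C) (HX : ProObj_ok X) (p q : ProHom X Y) :
  ProHom_eq p q -> UB p q.
Proof.
  induction 1 as [x y [_ [_ H]]|x|x y _ [r [H1 H2]]|x y z _ IH1 _ IH2].
  - exists x. split; auto. apply ge_refl; auto.
  - exists x. split; apply ge_refl; auto.
  - exists r; auto.
  - eapply ub_trans; eauto.
Qed.

Lemma comp_ok (X Y Z : ProObj C) (p : ProHom X Y) (q : ProHom Y Z) :
  ProHom_ok p -> ProHom_ok q -> ProHom_ok (ProHom_comp q p).
Proof.
  intros Hp Hq. split.
  - intros b b' H. apply Hp, Hq, H.
  - intros c c' h h'. simpl. rewrite ccomp_assoc. destruct Hq as [Hq1 Hq2].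
    rewrite (Hq2 c c' h (ok_mono (conj Hq1 Hq2) h)).
    rewrite <- !ccomp_assoc. f_equal. apply Hp.
Qed.

Lemma ge_comp_r (X Y Z : ProObj C) (p r : ProHom X Y) (q : ProHom Y Z) :
  ProHom_ge r p -> ProHom_ge (ProHom_comp q r) (ProHom_comp q p).
Proof.
  intros [A1 B1]. split. intro; apply A1. intros c h. simpl.
  rewrite (B1 _ (A1 _)). rewrite ccomp_assoc. f_equal. apply pmap_pi.
Qed.

Lemma ge_comp_l (X Y Z : ProObj C) (p : ProHom X Y) (q r : ProHom Y Z) :
  ProHom_ok p -> ProHom_ge r q -> ProHom_ge (ProHom_comp r p) (ProHom_comp q p).
Proof.
  intros Hp [A1 B1]. split. intro c; apply (ok_mono Hp), A1. intros c h. simpl.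
  rewrite (B1 _ (A1 _)). rewrite <- !ccomp_assoc. f_equal. apply Hp.
Qed.

Lemma comp_cong (X Y Z : ProObj C) (HX : ProObj_ok X) (HY : ProObj_ok Y) (p p' : ProHom X Y) (q q' : ProHom Y Z) :
  ProHom_ok p -> ProHom_ok p' -> ProHom_ok q -> ProHom_ok q' ->
  ProHom_eq p p' -> ProHom_eq q q' -> ProHom_eq (ProHom_comp q p) (ProHom_comp q' p').
Proof.
  intros Hp Hp' Hq Hq' E1 E2. apply ub_eq; auto; try apply comp_ok; auto.
  apply ub_trans with (ProHom_comp q p'); auto.
  - destruct (eq_ub HX E1) as [r [H1 H2]]. exists (ProHom_comp q r). split; apply ge_comp_r; auto.
  - destruct (eq_ub HY E2) as [r [H1 H2]]. exists (ProHom_comp r p'). split; apply ge_comp_l; auto.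
Qed.

Lemma ProLaws : Laws (ProCat C).
Proof.
  split; simpl.
  - intros; apply rst_refl.
  - intros; apply rst_sym; auto.
  - intros; eapply rst_trans; eauto.
  - intros a Ha. split. intros b b' H; exact H. intros b b' h h'. simpl.
    rewrite ccomp_id_l, ccomp_id_r. apply pmap_pi.
  - intros. apply comp_ok; auto.
  - intros. apply comp_cong; auto.
  - intros. unfold ProHom_comp; simpl.
    lazymatch goal with |- ProHom_eq ?x ?y => replace x with y; [apply rst_refl|] end.
    apply prohom_ext. intro; symmetry; apply ccomp_assoc.
  - intros a b f _ _ _. unfold ProHom_comp, ProHom_id; simpl. destruct f as [fa fp]; simpl.
    lazymatch goal with |- ProHom_eq ?x ?y => replace x with y; [apply rst_refl|] end.
    apply prohom_ext. intro; symmetry; apply ccomp_id_l.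
  - intros a b f _ _ _. unfold ProHom_comp, ProHom_id; simpl. destruct f as [fa fp]; simpl.
    lazymatch goal with |- ProHom_eq ?x ?y => replace x with y; [apply rst_refl|] end.
    apply prohom_ext. intro; symmetry; apply ccomp_id_r.
Qed.
End ProL.
Arguments lift {C X Y} q g Hg.

Set Implicit Arguments.
Unset Strict Implicit.

Section ProDL.
Variables C D : Cat.

Lemma qmap_pi (X : ProDObj C D) u v h1 h2 d d' f : qmap X u v h1 d d' f = qmap X u v h2 d d' f.
Proof. rewrite (proof_irrelevance _ h1 h2). reflexivity. Qed.

Lemma qmap_cc (X : ProDObj C D) (HX : ProDObj_ok X) u v w h1 h2 h3 d d' d'' f g :
  ccomp (qmap X v w h2 d' d'' g) (qmap X u v h1 d d' f) = qmap X u w h3 d d'' (ccomp g f).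
Proof. apply HX. Qed.

Lemma qmap_cc_id (X : ProDObj C D) (HX : ProDObj_ok X) u v w h1 h2 h3 d :
  ccomp (qmap X v w h2 d d (cid d)) (qmap X u v h1 d d (cid d)) = qmap X u w h3 d d (cid d).
Proof. rewrite (qmap_cc HX _ _ h3), ccomp_id_l. auto. Qed.

Lemma qmap_id (X : ProDObj C D) (HX : ProDObj_ok X) u h d : qmap X u u h d d (cid d) = cid _.
Proof. apply HX. Qed.

Lemma prodhom_ext (X Y : ProDObj C D) (a : pcar (qidx Y) -> pcar (qidx X))
  (f g : forall b d, chom C (qdiag X (a b) d) (qdiag Y b d)) :
  (forall b d, f b d = g b d) -> Build_ProDHom (qalpha:=a) f = Build_ProDHom (qalpha:=a) g.
Proof.
  intro H. f_equal. apply functional_extensionality_dep; intro b.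
  apply functional_extensionality_dep; auto.
Qed.

Definition UBD (X Y : ProDObj C D) (p q : ProDHom X Y) : Prop :=
  exists r, ProDHom_ge r p /\ ProDHom_ge r q.

Lemma geD_refl (X Y : ProDObj C D) (HX : ProDObj_ok X) (p : ProDHom X Y) : ProDHom_ge p p.
Proof. split. intro; apply ple_refl. intros b h d. rewrite qmap_id, ccomp_id_r; auto. Qed.

Lemma geD_trans (X Y : ProDObj C D) (HX : ProDObj_ok X) (r q p : ProDHom X Y) :
  ProDHom_ge r q -> ProDHom_ge q p -> ProDHom_ge r p.
Proof.
  intros [A1 B1] [A2 B2]. split. intro b; eapply ple_trans; eauto.
  intros b h d. rewrite (B1 b (A1 b)), (B2 b (A2 b)).
  rewrite <- ccomp_assoc. f_equal. apply qmap_cc_id; auto.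
Qed.

Definition liftD (X Y : ProDObj C D) (q : ProDHom X Y) (g : pcar (qidx Y) -> pcar (qidx X))
  (Hg : forall b, ple _ (qalpha q b) (g b)) : ProDHom X Y :=
  Build_ProDHom (qalpha := g)
    (fun b d => ccomp (qphi q b d) (qmap X (g b) (qalpha q b) (Hg b) d d (cid d))).
Arguments liftD {X Y} q g Hg.

Lemma liftD_ge (X Y : ProDObj C D) (HX : ProDObj_ok X) (q : ProDHom X Y) g Hg r :
  ProDHom_ge r q -> (forall b, ple _ (qalpha r b) (g b)) -> ProDHom_ge (liftD q g Hg) r.
Proof.
  intros [A1 B1] Hr. split; auto. intros b h d. simpl. rewrite (B1 b (A1 b)).
  rewrite <- ccomp_assoc. f_equal. symmetry. apply qmap_cc_id; auto.
Qed.

Lemma okD_mono (X Y : ProDObj C D) (p : ProDHom X Y) : ProDHom_ok p ->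
  forall b b', ple _ b b' -> ple _ (qalpha p b) (qalpha p b').
Proof. intros [H _]. apply (SIncr_mono (g := qalpha p)). exact H. Qed.

Lemma liftD_ok (X Y : ProDObj C D) (HX : ProDObj_ok X) (q : ProDHom X Y) g Hg :
  ProDHom_ok q -> SIncr g -> ProDHom_ok (liftD q g Hg).
Proof.
  intros Hq Hg'. split; auto. intros b b' h h' d d' f. simpl.
  rewrite ccomp_assoc. destruct Hq as [Hq1 Hq2].
  rewrite (Hq2 b b' h (okD_mono (conj Hq1 Hq2) h)).
  rewrite <- !ccomp_assoc. f_equal.
  rewrite !qmap_cc with (h3 := ple_trans (Hg b') h'); auto.
  rewrite ccomp_id_l, ccomp_id_r. auto.
Qed.

Lemma ubD_eq (X Y : ProDObj C D) (HX : ProDObj_ok X) (p q : ProDHom X Y) :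
  ProDHom_ok p -> ProDHom_ok q -> UBD p q -> ProDHom_eq p q.
Proof.
  intros Hp Hq [r [Hrp Hrq]].
  set (g := ubf (fun b => [qalpha r b])).
  assert (Hgr : forall b, ple _ (qalpha r b) (g b)) by (intro b; apply ubf_ge; simpl; auto).
  assert (Hg : forall b, ple _ (qalpha p b) (g b)) by (intro b; eapply ple_trans; [apply Hrp|apply Hgr]).
  set (s := liftD p g Hg).
  assert (Hs : ProDHom_ok s) by (apply liftD_ok; auto; apply ubf_SIncr).
  assert (Hsr : ProDHom_ge s r) by (apply liftD_ge; auto).
  apply rst_trans with s.
  - apply rst_sym, rst_step. split; auto. split; auto. eapply geD_trans; eauto.
  - apply rst_step. split; auto. split; auto. eapply geD_trans; eauto.
Qed.

Lemma ubD_trans (X Y : ProDObj C D) (HX : ProDObj_ok X) (p q t : ProDHom X Y) :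
  UBD p q -> UBD q t -> UBD p t.
Proof.
  intros [r1 [H1 H2]] [r2 [H3 H4]].
  set (g := ubf (fun b => [qalpha r1 b; qalpha r2 b])).
  assert (G1 : forall b, ple _ (qalpha r1 b) (g b)) by (intro b; apply ubf_ge; simpl; auto).
  assert (G2 : forall b, ple _ (qalpha r2 b) (g b)) by (intro b; apply ubf_ge; simpl; auto).
  assert (Hg : forall b, ple _ (qalpha q b) (g b)) by (intro b; eapply ple_trans; [apply H2|apply G1]).
  exists (liftD q g Hg). split.
  - eapply geD_trans; eauto. apply liftD_ge; auto.
  - eapply geD_trans; eauto. apply liftD_ge; auto.
Qed.

Lemma eqD_ub (X Y : ProDObj C D) (HX : ProDObj_ok X) (p q : ProDHom X Y) :
  ProDHom_eq p q -> UBD p q.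
Proof.
  induction 1 as [x y [_ [_ H]]|x|x y _ [r [H1 H2]]|x y z _ IH1 _ IH2].
  - exists x. split; auto. apply geD_refl; auto.
  - exists x. split; apply geD_refl; auto.
  - exists r; auto.
  - eapply ubD_trans; eauto.
Qed.

Lemma compD_ok (X Y Z : ProDObj C D) (p : ProDHom X Y) (q : ProDHom Y Z) :
  ProDHom_ok p -> ProDHom_ok q -> ProDHom_ok (ProDHom_comp q p).
Proof.
  intros Hp Hq. split.
  - intros b b' H. apply Hp, Hq, H.
  - intros c c' h h' d d' f. simpl. rewrite ccomp_assoc. destruct Hq as [Hq1 Hq2].
    rewrite (Hq2 c c' h (okD_mono (conj Hq1 Hq2) h)).
    rewrite <- !ccomp_assoc. f_equal. apply Hp.
Qed.

Lemma geD_comp_r (X Y Z : ProDObj C D) (p r : ProDHom X Y) (q : ProDHom Y Z) :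
  ProDHom_ge r p -> ProDHom_ge (ProDHom_comp q r) (ProDHom_comp q p).
Proof.
  intros [A1 B1]. split. intro; apply A1. intros c h d. simpl.
  rewrite (B1 _ (A1 _)). rewrite ccomp_assoc. f_equal. apply qmap_pi.
Qed.

Lemma geD_comp_l (X Y Z : ProDObj C D) (p : ProDHom X Y) (q r : ProDHom Y Z) :
  ProDHom_ok p -> ProDHom_ge r q -> ProDHom_ge (ProDHom_comp r p) (ProDHom_comp q p).
Proof.
  intros Hp [A1 B1]. split. intro c; apply (okD_mono Hp), A1. intros c h d. simpl.
  rewrite (B1 _ (A1 _)). rewrite <- !ccomp_assoc. f_equal. apply Hp.
Qed.

Lemma compD_cong (X Y Z : ProDObj C D) (HX : ProDObj_ok X) (HY : ProDObj_ok Y)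
  (p p' : ProDHom X Y) (q q' : ProDHom Y Z) :
  ProDHom_ok p -> ProDHom_ok p' -> ProDHom_ok q -> ProDHom_ok q' ->
  ProDHom_eq p p' -> ProDHom_eq q q' -> ProDHom_eq (ProDHom_comp q p) (ProDHom_comp q' p').
Proof.
  intros Hp Hp' Hq Hq' E1 E2. apply ubD_eq; auto; try apply compD_ok; auto.
  apply ubD_trans with (ProDHom_comp q p'); auto.
  - destruct (eqD_ub HX E1) as [r [H1 H2]]. exists (ProDHom_comp q r). split; apply geD_comp_r; auto.
  - destruct (eqD_ub HY E2) as [r [H1 H2]]. exists (ProDHom_comp r p'). split; apply geD_comp_l; auto.
Qed.

Lemma ProDLaws : Laws (ProDCat C D).
Proof.
  split; simpl.
  - intros; apply rst_refl.
  - intros; apply rst_sym; auto.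
  - intros; eapply rst_trans; eauto.
  - intros a Ha. split. intros b b' H; exact H. intros b b' h h' d d' f. simpl.
    rewrite ccomp_id_l, ccomp_id_r. apply qmap_pi.
  - intros. apply compD_ok; auto.
  - intros. apply compD_cong; auto.
  - intros. unfold ProDHom_comp; simpl.
    lazymatch goal with |- ProDHom_eq ?x ?y => replace x with y; [apply rst_refl|] end.
    apply prodhom_ext. intros; symmetry; apply ccomp_assoc.
  - intros a b f _ _ _. unfold ProDHom_comp, ProDHom_id; simpl. destruct f as [fa fp]; simpl.
    lazymatch goal with |- ProDHom_eq ?x ?y => replace x with y; [apply rst_refl|] end.
    apply prodhom_ext. intros; symmetry; apply ccomp_id_l.
  - intros a b f _ _ _. unfold ProDHom_comp, ProDHom_id; simpl. destruct f as [fa fp]; simpl.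
    lazymatch goal with |- ProDHom_eq ?x ?y => replace x with y; [apply rst_refl|] end.
    apply prodhom_ext. intros; symmetry; apply ccomp_id_r.
Qed.
End ProDL.
Arguments liftD {C D X Y} q g Hg.

Set Implicit Arguments.
Unset Strict Implicit.

Section LawsL.
Variables (E : SCat) (L : Laws E).
Lemma cgl a b c (f : shom E a b) (g g' : shom E b c) : sheq g g' ->
  sobj_ok a -> sobj_ok b -> sobj_ok c -> shom_ok f -> shom_ok g -> shom_ok g' ->
  sheq (scomp g f) (scomp g' f).
Proof. intros. apply (L_cong L); auto. apply (L_refl L). Qed.
Lemma cgr a b c (f f' : shom E a b) (g : shom E b c) : sheq f f' ->
  sobj_ok a -> sobj_ok b -> sobj_ok c -> shom_ok f -> shom_ok f' -> shom_ok g ->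
  sheq (scomp g f) (scomp g f').
Proof. intros. apply (L_cong L); auto. apply (L_refl L). Qed.
Lemma canc a b c (X : shom E a b) (e' : shom E b c) (e : shom E c b) :
  sheq (scomp e e') (sid b) -> sobj_ok a -> sobj_ok b -> sobj_ok c ->
  shom_ok X -> shom_ok e' -> shom_ok e -> sheq (scomp e (scomp e' X)) X.
Proof.
  intros H Ha Hb Hc HX He' He. eapply (L_trans L). apply (L_assoc L); auto.
  eapply (L_trans L). apply cgl; eauto. apply (L_compok L); auto.
  apply (L_idok L); auto. apply (L_idl L); auto.
Qed.
End LawsL.

Ltac okt L := repeat first [ assumption | apply (L_compok L) | apply (L_idok L) ].

Section FunL.
Variables (D : Cat) (E : SCat) (LE : Laws E).

Lemma FunLaws : Laws (FunCat D E).
Proof.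
  split; simpl.
  - intros; apply (L_refl LE).
  - intros; apply (L_sym LE); auto.
  - intros; eapply (L_trans LE); eauto.
  - intros X HX. destruct HX as [H1 [H2 _]]. split. intro; apply (L_idok LE); auto.
    intros d d' f. simpl. eapply (L_trans LE). apply (L_idr LE); auto.
    apply (L_sym LE). apply (L_idl LE); auto.
  - intros X Y Z f g HX HY HZ [Hf1 Hf2] [Hg1 Hg2].
    destruct HX as [X1 [X2 _]], HY as [Y1 [Y2 _]], HZ as [Z1 [Z2 _]].
    split. intro d; apply (L_compok LE); auto.
    intros d d' u. simpl.
    assert (O1 := X1 d); assert (O2 := X1 d'); assert (O3 := Y1 d); assert (O4 := Y1 d');
    assert (O5 := Z1 d); assert (O6 := Z1 d'); assert (O7 := X2 _ _ u); assert (O8 := Y2 _ _ u);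
    assert (O9 := Z2 _ _ u); assert (O10 := Hf1 d); assert (O11 := Hf1 d'); assert (O12 := Hg1 d);
    assert (O13 := Hg1 d').
    eapply (L_trans LE). apply (L_assoc LE); auto.
    eapply (L_trans LE). eapply (cgl LE). apply Hg2. all: okt LE.
    eapply (L_trans LE). apply (L_sym LE). apply (L_assoc LE); auto.
    eapply (L_trans LE). eapply (cgr LE). apply Hf2. all: okt LE.
    apply (L_assoc LE); auto.
  - intros X Y Z f f' g g' HX HY HZ Hf Hf' Hg Hg' E1 E2 d.
    apply (L_cong LE); auto. apply HX. apply HY. apply HZ. apply Hf. apply Hf'. apply Hg. apply Hg'.
  - intros. apply (L_assoc LE). apply H. apply H0. apply H1. apply H2. apply H3. apply H4. apply H5.
  - intros. apply (L_idl LE). apply H. apply H0. apply H1.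
  - intros. apply (L_idr LE). apply H. apply H0. apply H1.
Qed.
End FunL.

Unset Implicit Arguments.
Section Gen.
Variables (E F : SCat) (LE : Laws E) (LF : Laws F).
Variables (J : sobj E -> sobj F) (Jm : forall a b, shom E a b -> shom F (J a) (J b)).
Hypothesis HJ : IsFunctor E F J Jm.
Hypothesis faith : forall a b (f g : shom E a b), sobj_ok a -> sobj_ok b -> shom_ok f -> shom_ok g ->
  sheq (Jm a b f) (Jm a b g) -> sheq f g.
Variable jfull : forall a b, shom F (J a) (J b) -> shom E a b.
Hypothesis Hfull : forall a b (g : shom F (J a) (J b)), sobj_ok a -> sobj_ok b -> shom_ok g ->
  shom_ok (jfull a b g) /\ sheq (Jm a b (jfull a b g)) g.
Variable ho : sobj F -> sobj E.
Hypothesis Hho : forall y, sobj_ok y -> sobj_ok (ho y).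
Variables (eps : forall y, shom F (J (ho y)) y) (eps' : forall y, shom F y (J (ho y))).
Hypothesis Heps : forall y, sobj_ok y -> shom_ok (eps y) /\ shom_ok (eps' y) /\
  sheq (scomp (eps' y) (eps y)) (sid _) /\ sheq (scomp (eps y) (eps' y)) (sid y).

Lemma Jok a : sobj_ok a -> sobj_ok (J a).
Proof. apply HJ. Qed.
Lemma Jmok a b f : sobj_ok a -> sobj_ok b -> shom_ok f -> shom_ok (Jm a b f).
Proof. apply HJ. Qed.
Lemma Jcomp a b c (f : shom E a b) (g : shom E b c) : sobj_ok a -> sobj_ok b -> sobj_ok c ->
  shom_ok f -> shom_ok g -> sheq (Jm a c (scomp g f)) (scomp (Jm b c g) (Jm a b f)).
Proof. apply HJ. Qed.
Lemma Jid a : sobj_ok a -> sheq (Jm a a (sid a)) (sid (J a)).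
Proof. apply HJ. Qed.
Lemma eok y : sobj_ok y -> shom_ok (eps y). Proof. apply Heps. Qed.
Lemma eok' y : sobj_ok y -> shom_ok (eps' y). Proof. apply Heps. Qed.

Arguments Jok {a}. Arguments eok {y}. Arguments eok' {y}.
Definition hm a b (g : shom F a b) : shom E (ho a) (ho b) :=
  jfull (ho a) (ho b) (scomp (eps' b) (scomp g (eps a))).

Ltac ok2 := repeat (match goal with |- ?g => assert_fails (has_evar g) end; first [ assumption | apply (L_compok LF) | apply (L_idok LF)
  | apply (L_compok LE) | apply (L_idok LE) | apply Jok | apply Hho | apply Jmok | apply eok | apply eok' ]).

Lemma hmok a b (g : shom F a b) : sobj_ok a -> sobj_ok b -> shom_ok g ->
  shom_ok (hm _ _ g) /\ sheq (Jm _ _ (hm _ _ g)) (scomp (eps' b) (scomp g (eps a))).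
Proof. intros. apply Hfull; ok2. Qed.
Arguments hmok {a b g}.

Lemma Gen_equiv : IsEquivalence E F J Jm.
Proof.
  split. apply HJ.
  exists ho, hm. split; [|split].
  -
    split; [|split; [|split; [|split]]].
    + auto.
    + intros a b g Ha Hb Hg. apply hmok; auto.
    + intros a b g g' Ha Hb Hg Hg' Egg. destruct (hmok Ha Hb Hg) as [O1 E1].
      destruct (hmok Ha Hb Hg') as [O2 E2].
      apply faith; ok2. eapply (L_trans LF). apply E1. apply (L_sym LF) in E2.
      eapply (L_trans LF); [|apply E2]. apply (cgr LF). apply (cgl LF). auto. all: ok2.
    + intros a Ha. destruct (@hmok a a (sid a)) as [O1 E1]; ok2.
      destruct (Heps _ Ha) as [A1 [A2 [A3 A4]]]. apply faith; ok2.
      eapply (L_trans LF). apply E1. eapply (L_trans LF); [|apply (L_sym LF); apply Jid; ok2].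
      eapply (L_trans LF); [|apply A3]. apply (cgr LF). apply (L_idl LF). all: ok2.
    + intros a b c f g Ha Hb Hc Hf Hg.
      destruct (Heps _ Hb) as [B1 [B2 [B3 B4]]].
      destruct (hmok Ha Hb Hf) as [O1 E1]. destruct (hmok Hb Hc Hg) as [O2 E2].
      destruct (@hmok a c (scomp g f)) as [O3 E3]; ok2.
      apply faith; ok2.
      eapply (L_trans LF). apply E3.
      eapply (L_trans LF); [|apply (L_sym LF); apply Jcomp; ok2].
      apply (L_sym LF). eapply (L_trans LF).
      { eapply (L_cong LF); [..|apply E1|apply E2]; ok2. }
      eapply (L_trans LF). { apply (L_sym LF). apply (L_assoc LF); ok2. }
      apply (cgr LF); ok2.
      eapply (L_trans LF). { apply (L_sym LF). apply (L_assoc LF); ok2. }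
      eapply (L_trans LF). { apply (cgr LF). apply (canc LF). apply B4. all: ok2. }
      apply (L_assoc LF); ok2.
  -
    exists (fun x => jfull (ho (J x)) x (eps (J x))), (fun x => jfull x (ho (J x)) (eps' (J x))).
    split.
    + intros x Hx. assert (HJx := Jok Hx).
      destruct (Heps _ HJx) as [A1 [A2 [A3 A4]]].
      destruct (Hfull (ho (J x)) x (eps (J x))) as [F1 G1]; ok2.
      destruct (Hfull x (ho (J x)) (eps' (J x))) as [F2 G2]; ok2.
      split; auto. split; auto. split.
      * apply faith; ok2. eapply (L_trans LF). apply Jcomp; ok2.
        eapply (L_trans LF); [|apply (L_sym LF); apply Jid; ok2].
        eapply (L_trans LF); [|apply A3]. eapply (L_cong LF); [..|apply G1|apply G2]; ok2.
      * apply faith; ok2. eapply (L_trans LF). apply Jcomp; ok2.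
        eapply (L_trans LF); [|apply (L_sym LF); apply Jid; ok2].
        eapply (L_trans LF); [|apply A4]. eapply (L_cong LF); [..|apply G2|apply G1]; ok2.
    + intros x y f Hx Hy Hf. assert (HJx := Jok Hx). assert (HJy := Jok Hy).
      destruct (Heps _ HJy) as [A1 [A2 [A3 A4]]].
      destruct (Hfull (ho (J x)) x (eps (J x))) as [F1 G1]; ok2.
      destruct (Hfull (ho (J y)) y (eps (J y))) as [F2 G2]; ok2.
      destruct (@hmok (J x) (J y) (Jm x y f)) as [F3 G3]; ok2.
      apply faith; ok2.
      eapply (L_trans LF). apply Jcomp; ok2.
      eapply (L_trans LF); [|apply (L_sym LF); apply Jcomp; ok2].
      eapply (L_trans LF). { apply (cgr LF). apply G1. all: ok2. }
      eapply (L_trans LF); [|apply (L_sym LF); apply (L_cong LF); [..|apply G3|apply G2]; ok2].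
      apply (L_sym LF). apply (canc LF). apply A4. all: ok2.
  -
    exists eps, eps'. split.
    + intros y Hy. apply Heps; auto.
    + intros a b g Ha Hb Hg. destruct (Heps _ Hb) as [A1 [A2 [A3 A4]]].
      destruct (hmok Ha Hb Hg) as [F3 G3].
      eapply (L_trans LF); [|apply (L_sym LF); apply (cgr LF); [apply G3|..]; ok2].
      apply (L_sym LF). apply (canc LF). apply A4. all: ok2.
Qed.
End Gen.

Set Implicit Arguments.
Unset Strict Implicit.

Section J.
Variables C D : Cat.

Lemma jat_ok (X : ProDObj C D) (HX : ProDObj_ok X) d : ProObj_ok (jD_at X d).
Proof.
  split; simpl. intros; apply qmap_id; auto. intros; apply qmap_cc_id; auto.
Qed.

Lemma jatmor_ok (X : ProDObj C D) (HX : ProDObj_ok X) d d' (f : chom D d d') :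
  ProHom_ok (jD_atmor X f).
Proof.
  split. intros b b' H; exact H. intros b b' h h'. simpl.
  rewrite !(qmap_cc HX _ _ h). rewrite ccomp_id_l, ccomp_id_r. auto.
Qed.

Lemma jobj_ok (X : ProDObj C D) (HX : ProDObj_ok X) : FunObj_ok (jD_obj X).
Proof.
  split; [|split; [|split]]; simpl.
  - intro d. apply jat_ok; auto.
  - intros. apply jatmor_ok; auto.
  - intro d. unfold jD_atmor, ProHom_id; simpl.
    lazymatch goal with |- ProHom_eq ?x ?y => replace x with y; [apply rst_refl|] end.
    apply prohom_ext. intro b. symmetry. apply qmap_id; auto.
  - intros d d' d'' f g. unfold jD_atmor, ProHom_comp; simpl.
    lazymatch goal with |- ProHom_eq ?x ?y => replace x with y; [apply rst_refl|] end.
    apply prohom_ext. intro b. apply qmap_cc; auto.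
Qed.

Lemma jmor_d_ok (X Y : ProDObj C D) (p : ProDHom X Y) d : ProDHom_ok p -> ProHom_ok (jD_mor p d).
Proof.
  intros [H1 H2]. split. exact H1. intros b b' h h'. simpl. apply H2.
Qed.

Lemma jmor_ok (X Y : ProDObj C D) (p : ProDHom X Y) : ProDHom_ok p -> FunHom_ok (jD_mor p).
Proof.
  intros Hp. split. intro d; apply jmor_d_ok; auto.
  intros d d' f. simpl. unfold jD_atmor, ProHom_comp; simpl.
  lazymatch goal with |- ProHom_eq ?x ?y => replace x with y; [apply rst_refl|] end.
  apply prohom_ext. intro b. symmetry. apply Hp.
Qed.

Lemma j_functor : IsFunctor (ProDCat C D) (FunCat D (ProCat C)) (@jD_obj C D) (@jD_mor C D).
Proof.
  split; [|split; [|split; [|split]]]; simpl.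
  - intros; apply jobj_ok; auto.
  - intros; apply jmor_ok; auto.
  - intros X Y f g _ _ _ _ E d. induction E as [x y [Hx [Hy [G1 G2]]]|x|x y _ IH|x y z _ IH1 _ IH2].
    + apply rst_step. split. apply jmor_d_ok; auto. split. apply jmor_d_ok; auto.
      split. exact G1. intros b h. simpl. apply G2.
    + apply rst_refl.
    + apply rst_sym; auto.
    + eapply rst_trans; eauto.
  - intros X _ d. apply rst_refl.
  - intros. apply rst_refl.
Qed.

Lemma j_faithful (X Y : ProDObj C D) (p q : ProDHom X Y) :
  (exists l : list (cobj D), forall x, In x l) ->
  ProDObj_ok X -> ProDObj_ok Y -> ProDHom_ok p -> ProDHom_ok q ->
  (forall d, ProHom_eq (jD_mor p d) (jD_mor q d)) -> ProDHom_eq p q.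
Proof.
  intros [ds Hds] HX HY Hp Hq E.
  assert (R : forall d, {r | ProHom_ge r (jD_mor p d) /\ ProHom_ge r (jD_mor q d)}).
  { intro d. apply constructive_indefinite_description. apply eq_ub; auto. apply jat_ok; auto. }
  set (g := ubf (fun b => qalpha p b :: qalpha q b :: map (fun d => palpha (proj1_sig (R d)) b) ds)).
  assert (Gp : forall b, ple _ (qalpha p b) (g b)) by (intro; apply ubf_ge; simpl; auto).
  assert (Gq : forall b, ple _ (qalpha q b) (g b)) by (intro; apply ubf_ge; simpl; auto).
  assert (Gr : forall d b, ple _ (palpha (proj1_sig (R d)) b) (g b)).
  { intros d b; apply ubf_ge; simpl; right; right. apply in_map_iff. eauto. }
  apply ubD_eq; auto. exists (liftD p g Gp). split.
  - apply liftD_ge; auto. apply geD_refl; auto.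
  - split. exact Gq. intros b h d. simpl.
    specialize (Gr d b).
    destruct (R d) as [r [[A1 B1] [A2 B2]]]; simpl in *.
    assert (E1 := B1 b (A1 b)). assert (E2 := B2 b (A2 b)). simpl in E1, E2.
    rewrite <- (qmap_cc_id HX Gr (A1 b) _ d).
    rewrite <- (qmap_cc_id HX Gr (A2 b) _ d).
    rewrite !ccomp_assoc, <- E1, <- E2. auto.
Qed.
End J.

Unset Implicit Arguments.
Unset Strict Implicit.

Lemma qmap_cc_r C D (X : ProDObj C D) (HX : ProDObj_ok X) u v w h1 h2 h3 d d' d'' f g e (k : chom C e _) :
  ccomp (qmap X v w h2 d' d'' g) (ccomp (qmap X u v h1 d d' f) k) = ccomp (qmap X u w h3 d d'' (ccomp g f)) k.
Proof. rewrite ccomp_assoc. f_equal. apply HX. Qed.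
Arguments qmap_cc_r {C D X} HX {u v w} h1 h2 h3 {d d' d''} f g {e} k.

Section JF.
Variables C D : Cat.
Variable ds : list (cobj D).
Hypothesis Hds : forall d, In d ds.
Variable homs : forall d d' : cobj D, list (chom D d d').
Hypothesis Hhoms : forall d d' f, In f (homs d d').
Variables X Y : ProDObj C D.
Variable eta : FunHom (jD_obj X) (jD_obj Y).

Definition natP d d' (f : chom D d d') (r : ProHom (jD_at X d) (jD_at Y d')) : Prop :=
  ProHom_ge r (ProHom_comp (jD_atmor Y f) (eta d)) /\ ProHom_ge r (ProHom_comp (eta d') (jD_atmor X f)).

Definition rw d d' (f : chom D d d') : ProHom (jD_at X d) (jD_at Y d') :=
  match xm (exists r, natP d d' f r) with
  | left H => proj1_sig (constructive_indefinite_description _ H)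
  | right _ => ProHom_comp (eta d') (jD_atmor X f) end.

Lemma rw_spec d d' (f : chom D d d') : (exists r, natP d d' f r) -> natP d d' f (rw d d' f).
Proof.
  intro H. unfold rw. destruct (xm _) as [H'|N]; [|contradiction].
  apply (proj2_sig (constructive_indefinite_description _ H')).
Qed.

Definition gam : pcar (qidx Y) -> pcar (qidx X) :=
  ubf (fun b => flat_map (fun d => palpha (eta d) b ::
          flat_map (fun d' => map (fun f => palpha (rw d d' f) b) (homs d d')) ds) ds).

Lemma gam_ge1 d b : ple _ (palpha (eta d) b) (gam b).
Proof. apply ubf_ge. apply in_flat_map. exists d. simpl; auto. Qed.

Lemma gam_ge2 d d' (f : chom D d d') b : ple _ (palpha (rw d d' f) b) (gam b).
Proof.
  apply ubf_ge. apply in_flat_map. exists d. split; auto. right.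
  apply in_flat_map. exists d'. split; auto. apply in_map_iff. eauto.
Qed.

Definition jfull : ProDHom X Y :=
  Build_ProDHom (qalpha := gam)
    (fun b d => ccomp (pphi (eta d) b) (qmap X (gam b) (palpha (eta d) b) (gam_ge1 d b) d d (cid d))).

Lemma jfull_ok : ProDObj_ok X -> ProDObj_ok Y -> FunHom_ok eta ->
  ProDHom_ok jfull /\ forall d, ProHom_eq (jD_mor jfull d) (eta d).
Proof.
  intros HX HY [He1 He2].
  assert (Hok : ProDHom_ok jfull).
  { split. apply ubf_SIncr.
    intros b b' h h' d d' f. simpl. cbn [fo jD_obj] in *.
    assert (HN : exists r, natP d d' f r).
    { apply eq_ub. apply jat_ok; auto. apply He2. }
    destruct (rw_spec d d' f HN) as [[A1 B1] [A2 B2]].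
    set (r := rw d d' f) in *. simpl in A1, A2, B1, B2.
    assert (Hrb : ple _ (palpha r b') (gam b)) by (eapply ple_trans; [apply (gam_ge2 d d' f)|exact h']).
    rewrite <- ccomp_assoc, (qmap_cc HX _ _ (ple_trans (gam_ge1 d' b') h')), ccomp_id_l.
    assert (Hsplit : qmap Y b b' h d d' f =
       ccomp (qmap Y b' b' (ple_refl b') d d' f) (qmap Y b b' h d d (cid d))).
    { rewrite (qmap_cc HY _ _ h). rewrite ccomp_id_r. auto. }
    rewrite Hsplit. clear Hsplit.
    assert (Hm : ple _ (palpha (eta d) b') (palpha (eta d) b)) by (apply (ok_mono (He1 d)); auto).
    assert (N := proj2 (He1 d) b b' h Hm). simpl in N. cbn [fo jD_obj] in *.
    rewrite <- (ccomp_assoc _ (qmap Y b b' h d d (cid d))). rewrite (ccomp_assoc _ (pphi (eta d) b)). cbn [fo jD_obj pdiag jD_at] in *. rewrite N.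
    rewrite <- ccomp_assoc, (qmap_cc_id HX _ _ (ple_trans Hm (gam_ge1 d b))).
    rewrite <- (qmap_cc_id HX Hrb (A1 b') _ d).
    rewrite !ccomp_assoc. rewrite <- (B1 b' (A1 b')). rewrite (B2 b' (A2 b')).
    rewrite <- !ccomp_assoc. f_equal.
    rewrite (qmap_cc_id HX Hrb (A2 b') (ple_trans (A2 b') Hrb) d).
    rewrite (qmap_cc HX _ _ (ple_trans (A2 b') Hrb)), ccomp_id_r.
    apply qmap_pi. }
  split; auto. intro d. apply ub_eq.
  apply jat_ok; auto. apply jmor_d_ok; auto. apply He1.
  exists (jD_mor jfull d). split. apply ge_refl. apply jat_ok; auto.
  split. apply gam_ge1. intros b h. simpl. f_equal. apply qmap_pi.
Qed.
End JF.

Unset Implicit Arguments.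

Lemma count_lt (T : Type) (p q : T -> bool) (l : list T) y :
  (forall x, p x = true -> q x = true) -> In y l -> p y = false -> q y = true ->
  length (filter p l) < length (filter q l).
Proof.
  intros Hpq. induction l as [|a l IH]; simpl. tauto.
  assert (Hle : forall l, length (filter p l) <= length (filter q l)).
  { induction l0; simpl; auto. destruct (p a0) eqn:E. rewrite (Hpq _ E). simpl; lia.
    destruct (q a0); simpl; lia. }
  intros [<-|Hy] Hp Hq. rewrite Hp, Hq. simpl. specialize (Hle l). lia.
  specialize (IH Hy Hp Hq). destruct (p a) eqn:E. rewrite (Hpq _ E). simpl; lia.
  destruct (q a); simpl; lia.
Qed.

Definition patch (T : Type) (B : T -> Type) (g : forall t, B t) (t0 : T) (x : B t0) : forall t, B t :=
  fun t => match xm (t0 = t) with left e => eq_rect t0 B x t e | right _ => g t end.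

Lemma fin_dep (T : Type) (B : T -> Type) (ds : list T) (Hds : forall t, In t ds)
  (l : forall t, list (B t)) (S : (forall t, B t) -> Prop)
  (HS : forall g, S g -> forall t, In (g t) (l t)) :
  exists L, forall g, S g -> In g L.
Proof.
  assert (Cl : forall ds', exists L, forall g, S g -> exists g', In g' L /\ forall t, In t ds' -> g' t = g t).
  { induction ds' as [|t0 ds' [L HL]].
    - destruct (classic (exists g, S g)) as [[g0 H0]|N].
      + exists [g0]. intros g _. exists g0. simpl; intuition.
      + exists []. intros g Hg. exfalso; eauto.
    - exists (flat_map (fun g' => map (fun x => patch T B g' t0 x) (l t0)) L).
      intros g Hg. destruct (HL g Hg) as [g' [Hin Hag]].
      exists (patch T B g' t0 (g t0)). split.
      + apply in_flat_map. exists g'. split; auto. apply in_map_iff. exists (g t0); split; auto.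
      + intros t Ht. unfold patch. destruct (xm (t0 = t)) as [e|ne].
        * destruct e. simpl. reflexivity.
        * destruct Ht as [<-|Ht]; [contradiction|]. auto. }
  destruct (Cl ds) as [L HL]. exists L. intros g Hg. destruct (HL g Hg) as [g' [Hin Hag]].
  replace g with g'; auto. apply functional_extensionality_dep; intro t; auto.
Qed.

Section H.
Variables C D : Cat.
Hypothesis HDsl : StronglyLoopless D.
Variable ds : list (cobj D).
Hypothesis Hds : forall d, In d ds.
Variable homs : forall d d' : cobj D, list (chom D d d').
Hypothesis Hhoms : forall d d' f, In f (homs d d').

Definition Rd (d' d : cobj D) : Prop := d <> d' /\ inhabited (chom D d d').

Lemma Rd_trans d d' d'' : Rd d'' d' -> Rd d' d -> Rd d'' d.
Proof.
  intros [N1 [g]] [N2 [f]]. split; [|exact (inhabits (ccomp g f))].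
  intro E; subst d''. apply N2. apply (proj2 HDsl). exists f, g. split; apply (proj1 HDsl).
Qed.

Definition cnt (d : cobj D) : nat :=
  length (filter (fun e => if xm (Rd e d) then true else false) ds).

Lemma wf_Rd : well_founded Rd.
Proof.
  apply (wf_incl _ _ (fun x y => cnt x < cnt y)).
  - intros d' d H. unfold cnt. apply count_lt with d'.
    + intros x. destruct (xm (Rd x d')); destruct (xm (Rd x d)); auto.
      exfalso. eauto using Rd_trans. 
    + auto.
    + destruct (xm (Rd d' d')) as [[N _]|]; auto; try congruence.
    + destruct (xm (Rd d' d)); auto; try contradiction.
  - apply (well_founded_ltof _ cnt).
Qed.

Variable Y : FunObj D (ProCat C).
Definition AA (d : cobj D) : DirPoset := pidx (fo Y d).
Definition af d d' (f : chom D d d') : pcar (AA d') -> pcar (AA d) := palpha (fm Y f).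

Definition rhoP d d' d'' (f : chom D d d') (g : chom D d' d'') (r : ProHom (fo Y d) (fo Y d'')) : Prop :=
  ProHom_ge r (fm Y (ccomp g f)) /\ ProHom_ge r (ProHom_comp (fm Y g) (fm Y f)).

Definition rho d d' d'' (f : chom D d d') (g : chom D d' d'') : ProHom (fo Y d) (fo Y d'') :=
  match xm (exists r, rhoP d d' d'' f g r) with
  | left H => proj1_sig (constructive_indefinite_description _ H)
  | right _ => fm Y (ccomp g f) end.

Lemma rho_spec d d' d'' f g : (exists r, rhoP d d' d'' f g r) -> rhoP d d' d'' f g (rho d d' d'' f g).
Proof.
  intro H. unfold rho. destruct (xm _) as [H'|N]; [|contradiction].
  apply (proj2_sig (constructive_indefinite_description _ H')).
Qed.

Definition Tup := forall d, pcar (AA d).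

Definition Compat (a : Tup) : Prop :=
  (forall d d' (f : chom D d d'), d <> d' -> ple (AA d) (af d d' f (a d')) (a d)) /\
  (forall d d' d'' (f : chom D d d') (g : chom D d' d''), d <> d' -> d' <> d'' ->
      ple (AA d) (palpha (rho d d' d'' f g) (a d'')) (a d)).

Definition Lstep (lb : forall d, list (pcar (AA d))) (d : cobj D)
  (rec : forall d', Rd d' d -> pcar (AA d')) : pcar (AA d) :=
  abv (lb d ++ flat_map (fun d' => match xm (Rd d' d) with
     | left H => map (fun f => af d d' f (rec d' H)) (homs d d') ++
         flat_map (fun d'' => match xm (Rd d'' d) with
            | left H2 => flat_map (fun f => map (fun g => palpha (rho d d' d'' f g) (rec d'' H2))
                             (homs d' d'')) (homs d d')
            | right _ => [] end) ds
     | right _ => [] end) ds).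

Definition LL (lb : forall d, list (pcar (AA d))) : Tup := Fix wf_Rd (fun d => pcar (AA d)) (Lstep lb).

Lemma LL_eq lb d : LL lb d = Lstep lb d (fun d' _ => LL lb d').
Proof.
  unfold LL. rewrite Fix_eq. reflexivity.
  intros x f g Hfg. assert (f = g) as ->; auto.
  apply functional_extensionality_dep; intro y. apply functional_extensionality_dep; intro p. auto.
Qed.

Lemma LL_ge lb d x : In x (lb d) -> ple (AA d) x (LL lb d).
Proof. intro H. rewrite LL_eq. apply abv_le. apply in_or_app; auto. Qed.

Lemma LL_compat lb : Compat (LL lb).
Proof.
  split.
  - intros d d' f N. rewrite (LL_eq lb d). apply abv_le. apply in_or_app; right.
    apply in_flat_map. exists d'. split; auto. destruct (xm (Rd d' d)) as [H|H].
    + apply in_or_app; left. apply in_map_iff. exists f; auto.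
    + exfalso. apply H. split; [auto|exact (inhabits f)].
  - intros d d' d'' f g N1 N2. rewrite (LL_eq lb d). apply abv_le. apply in_or_app; right.
    apply in_flat_map. exists d'. split; auto. destruct (xm (Rd d' d)) as [H|H].
    + apply in_or_app; right. apply in_flat_map. exists d''. split; auto.
      destruct (xm (Rd d'' d)) as [H2|H2].
      * apply in_flat_map. exists f. split; auto. apply in_map_iff. exists g; auto.
      * exfalso. apply H2. apply Rd_trans with d'; auto. split; [auto|exact (inhabits g)].
    + exfalso. apply H. split; [auto|exact (inhabits f)].
Qed.

Definition PT := {x : Tup * nat | Compat (fst x)}.
Definition pi (d : cobj D) (p : PT) : pcar (AA d) := fst (proj1_sig p) d.
Definition PLe (x y : PT) : Prop := (forall d, ple (AA d) (pi d x) (pi d y)) /\ snd (proj1_sig x) <= snd (proj1_sig y).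

Lemma PLe_refl x : PLe x x.
Proof. split; auto. intro; apply ple_refl. Qed.
Lemma PLe_trans x y z : PLe x y -> PLe y z -> PLe x z.
Proof. intros [A1 B1] [A2 B2]. split. intro d; eapply ple_trans; eauto. lia. Qed.
Lemma PLe_antisym x y : PLe x y -> PLe y x -> x = y.
Proof.
  destruct x as [[a n] Ha], y as [[b m] Hb]. intros [A1 B1] [A2 B2]; unfold pi in *; simpl in *.
  assert (a = b) by (apply functional_extensionality_dep; intro d; apply ple_antisym; auto).
  assert (n = m) by lia. subst. f_equal. apply proof_irrelevance.
Qed.

Lemma PLe_cof u : exists l : list PT, forall v, PLe v u -> In v l.
Proof.
  destruct (fin_dep (cobj D) (fun d => pcar (AA d)) ds Hds (fun d => predlist (pi d u))
     (fun g => exists v, PLe v u /\ fst (proj1_sig v) = g)) as [L HL].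
  { intros g [v [[Hv _] <-]] t. apply predlist_spec. apply Hv. }
  exists (flat_map (fun g => flat_map (fun k => match xm (Compat g) with
            left H => [exist _ (g, k) H] | right _ => [] end) (seq 0 (S (snd (proj1_sig u))))) L).
  intros v Hv. apply in_flat_map. exists (fst (proj1_sig v)). split. apply HL. eauto.
  apply in_flat_map. exists (snd (proj1_sig v)). split. apply in_seq. destruct Hv. lia.
  destruct v as [[g k] Hg]; simpl. destruct (xm (Compat g)) as [H|N]; [|contradiction].
  left. f_equal. apply proof_irrelevance.
Qed.

Definition mkP (lb : forall d, list (pcar (AA d))) (n : nat) : PT :=
  exist _ (LL lb, n) (LL_compat lb).

Lemma PLe_dir u v : exists w, PLe u w /\ PLe v w.
Proof.
  exists (mkP (fun d => [pi d u; pi d v]) (Nat.max (snd (proj1_sig u)) (snd (proj1_sig v)))).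
  split; split; simpl; try lia; intro d; apply LL_ge; simpl; auto.
Qed.

Lemma PLe_inf n : exists c : nat -> PT, forall i, i < n -> PLe (c i) (c (S i)) /\ c i <> c (S i).
Proof.
  exists (fun i => mkP (fun _ => []) i). intros i _. split.
  split; simpl; auto. intro; apply ple_refl.
  intro E. apply (f_equal (fun p => snd (proj1_sig p))) in E. simpl in E. lia.
Qed.

Definition PP : DirPoset := @Build_DirPoset PT PLe PLe_refl PLe_trans PLe_antisym PLe_cof PLe_dir PLe_inf.

Lemma pi_mono d (u v : pcar PP) : ple PP v u -> ple (AA d) (pi d v) (pi d u).
Proof. intros [H _]. apply H. Qed.

Lemma pi_compat1 (v : pcar PP) d d' (f : chom D d d') : d <> d' -> ple (AA d) (af d d' f (pi d' v)) (pi d v).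
Proof. intro N. apply (proj1 (proj2_sig v)); auto. Qed.

Definition hq (u v : pcar PP) (h : ple PP v u) (d d' : cobj D) (f : chom D d d') :
  chom C (pdiag (fo Y d) (pi d u)) (pdiag (fo Y d') (pi d' v)) :=
  match xm (d = d') with
  | left e => eq_rect d (fun d' => chom C (pdiag (fo Y d) (pi d u)) (pdiag (fo Y d') (pi d' v)))
               (pmap (fo Y d) (pi d u) (pi d v) (pi_mono d u v h)) d' e
  | right ne => ccomp (pphi (fm Y f) (pi d' v))
        (pmap (fo Y d) (pi d u) (af d d' f (pi d' v)) (ple_trans (pi_compat1 v d d' f ne) (pi_mono d u v h)))
  end.

Definition hD : ProDObj C D :=
  @Build_ProDObj C D PP (fun p d => pdiag (fo Y d) (pi d p)) hq.

Lemma hq_id u v h d (f : chom D d d) H : hq u v h d d f = pmap (fo Y d) (pi d u) (pi d v) H.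
Proof.
  unfold hq. destruct (xm (d = d)) as [e|N]; [|congruence].
  rewrite (proof_irrelevance _ e eq_refl). simpl. apply pmap_pi.
Qed.

Lemma hq_ne u v h d d' (f : chom D d d') (N : d <> d') H :
  hq u v h d d' f = ccomp (pphi (fm Y f) (pi d' v)) (pmap (fo Y d) (pi d u) (af d d' f (pi d' v)) H).
Proof.
  unfold hq. destruct (xm (d = d')) as [e|N']; [contradiction|]. f_equal. apply pmap_pi.
Qed.

Lemma pi_compat2 (w : pcar PP) d d' d'' (f : chom D d d') (g : chom D d' d'') : d <> d' -> d' <> d'' ->
  ple (AA d) (palpha (rho d d' d'' f g) (pi d'' w)) (pi d w).
Proof. intros. apply (proj2 (proj2_sig w)); auto. Qed.

Lemma loop d (f : chom D d d) : f = cid d.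
Proof. apply (proj1 HDsl). Qed.

Lemma hD_ok : FunObj_ok Y -> ProDObj_ok hD.
Proof.
  intros [HY1 [HY2 [HY3 HY4]]]. split.
  - intros u h d. simpl. rewrite (hq_id u u h d (cid d) (pi_mono d u u h)). apply pmap_id, HY1.
  - intros u v w h1 h2 h3 d d' d'' f g. simpl.
    destruct (xm (d = d')) as [e1|n1]; destruct (xm (d' = d'')) as [e2|n2].
    + subst d' d''. rewrite (loop d f), (loop d g), ccomp_id_l.
      rewrite (hq_id u v h1 d (cid d) (pi_mono d u v h1)), (hq_id v w h2 d (cid d) (pi_mono d v w h2)),
        (hq_id u w h3 d (cid d) (pi_mono d u w h3)). apply pmap_cc, HY1.
    + subst d'. rewrite (loop d f), ccomp_id_r.
      rewrite (hq_id u v h1 d (cid d) (pi_mono d u v h1)).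
      rewrite (hq_ne v w h2 d d'' g n2 (ple_trans (pi_compat1 w d d'' g n2) (pi_mono d v w h2))).
      rewrite (hq_ne u w h3 d d'' g n2 (ple_trans (pi_compat1 w d d'' g n2) (pi_mono d u w h3))).
      rewrite <- ccomp_assoc. f_equal. apply pmap_cc, HY1.
    + subst d''. rewrite (loop d' g), ccomp_id_l.
      rewrite (hq_id v w h2 d' (cid d') (pi_mono d' v w h2)).
      rewrite (hq_ne u v h1 d d' f n1 (ple_trans (pi_compat1 v d d' f n1) (pi_mono d u v h1))).
      rewrite (hq_ne u w h3 d d' f n1 (ple_trans (pi_compat1 w d d' f n1) (pi_mono d u w h3))).
      unfold af in *.
      rewrite ccomp_assoc.
      rewrite (proj2 (HY2 _ _ f) _ _ (pi_mono d' _ _ h2) (ok_mono (HY2 _ _ f) (pi_mono d' _ _ h2))).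
      rewrite <- ccomp_assoc. f_equal. apply pmap_cc, HY1.
    + assert (n3 : d <> d'').
      { intro E. apply (proj1 (Rd_trans d d' d'' (conj n2 (inhabits g)) (conj n1 (inhabits f)))). auto. }
      rewrite (hq_ne u v h1 d d' f n1 (ple_trans (pi_compat1 v d d' f n1) (pi_mono d u v h1))).
      rewrite (hq_ne v w h2 d' d'' g n2 (ple_trans (pi_compat1 w d' d'' g n2) (pi_mono d' v w h2))).
      rewrite (hq_ne u w h3 d d'' (ccomp g f) n3 (ple_trans (pi_compat1 w d d'' (ccomp g f) n3) (pi_mono d u w h3))).
      unfold af in *.
      assert (HN : exists r, rhoP d d' d'' f g r).
      { apply eq_ub. apply HY1. apply HY4. }
      destruct (rho_spec d d' d'' f g HN) as [[A1 B1] [A2 B2]].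
      assert (Hr := pi_compat2 w d d' d'' f g n1 n2).
      set (r := rho d d' d'' f g) in *. simpl in A2, B2.
      assert (Hr' : ple _ (palpha r (pi d'' w)) (pi d u)).
      { eapply ple_trans; [exact Hr|]. exact (pi_mono d u w h3). }
      assert (hp : ple (pidx (fo Y d')) (palpha (fm Y g) (pi d'' w)) (pi d' v)).
      { exact (ple_trans (pi_compat1 w d' d'' g n2) (pi_mono d' v w h2)). }
      rewrite <- ccomp_assoc, (ccomp_assoc _ (pphi (fm Y f) (pi d' v))).
      rewrite (proj2 (HY2 _ _ f) (pi d' v) _ _ (ok_mono (HY2 _ _ f) hp)).
      rewrite <- ccomp_assoc, (pmap_cc (HY1 d) _ _ (ple_trans (A2 _) Hr')).
      rewrite <- (pmap_cc (HY1 d) Hr' (A2 _) _).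
      rewrite !ccomp_assoc, <- (B2 _ (A2 _)), (B1 _ (A1 _)).
      rewrite <- ccomp_assoc. f_equal. apply pmap_cc, HY1.
Qed.

Lemma hq_id' u v h d (f : chom D d d) : hq u v h d d f = pmap (fo Y d) (pi d u) (pi d v) (pi_mono d u v h).
Proof. apply hq_id. Qed.

Lemma pmap_cc' (X : ProObj C) (HX : ProObj_ok X) u v w (h1 : ple _ v u) (h2 : ple _ w v) :
  ccomp (pmap X v w h2) (pmap X u v h1) = pmap X u w (ple_trans h2 h1).
Proof. apply HX. Qed.
Lemma pmap_ccr' (X : ProObj C) (HX : ProObj_ok X) u v w (h1 : ple _ v u) (h2 : ple _ w v) e (k : chom C e _) :
  ccomp (pmap X v w h2) (ccomp (pmap X u v h1) k) = ccomp (pmap X u w (ple_trans h2 h1)) k.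
Proof. rewrite ccomp_assoc. f_equal. apply HX. Qed.
Lemma ccomp_pmap_pi (X : ProObj C) u w p1 p2 e (k : chom C _ e) :
  ccomp k (pmap X u w p1) = ccomp k (pmap X u w p2).
Proof. rewrite (proof_irrelevance _ p1 p2). auto. Qed.

Ltac pnorm HX := repeat (rewrite <- ?ccomp_assoc; first [rewrite (pmap_cc' _ HX) | rewrite (pmap_ccr' _ HX)]).

Definition lbd d (a : pcar (AA d)) : forall e, list (pcar (AA e)) :=
  fun e => match xm (d = e) with left H => [eq_rect d (fun e => pcar (AA e)) a e H] | right _ => [] end.
Definition liftP d a : pcar PP := mkP (lbd d a) 0.
Lemma liftP_ge d a : ple (AA d) a (pi d (liftP d a)).
Proof.
  unfold liftP, mkP, pi; simpl. apply LL_ge. unfold lbd. destruct (xm (d = d)) as [e|N]; [|congruence].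
  rewrite (proof_irrelevance _ e eq_refl). simpl; auto.
Qed.

Definition beta d : pcar (AA d) -> pcar PP := @ubf (AA d) PP (fun a => [liftP d a]).
Lemma beta_ge d a : ple (AA d) a (pi d (beta d a)).
Proof. eapply ple_trans. apply liftP_ge. apply pi_mono. apply ubf_ge. simpl; auto. Qed.
Definition sigma d : pcar PP -> pcar (AA d) := @ubf PP (AA d) (fun p => [pi d p]).
Lemma sigma_ge d p : ple (AA d) (pi d p) (sigma d p).
Proof. apply ubf_ge. simpl; auto. Qed.

Definition eps : FunHom (jD_obj hD) Y := fun d =>
  @Build_ProHom C (jD_at hD d) (fo Y d) (beta d) (fun a => pmap (fo Y d) (pi d (beta d a)) a (beta_ge d a)).
Definition eps' : FunHom Y (jD_obj hD) := fun d =>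
  @Build_ProHom C (fo Y d) (jD_at hD d) (sigma d) (fun p => pmap (fo Y d) (sigma d p) (pi d p) (sigma_ge d p)).

Section OK.
Hypothesis HY : FunObj_ok Y.
Let HY1 := proj1 HY.
Let HY2 := proj1 (proj2 HY).
Let HX := hD_ok HY.

Lemma eps_d_ok d : ProHom_ok (eps d).
Proof.
  split. apply ubf_SIncr. intros b b' h h'. simpl. rewrite hq_id'.
  pnorm (HY1 d). apply pmap_pi.
Qed.
Lemma eps'_d_ok d : ProHom_ok (eps' d).
Proof.
  split. apply ubf_SIncr. intros b b' h h'. simpl. rewrite hq_id'.
  pnorm (HY1 d). apply pmap_pi.
Qed.
Let LP := ProLaws C.
Let HY3 := proj1 (proj2 (proj2 HY)).

Lemma eps_nat d d' (f : chom D d d') :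
  ProHom_eq (ProHom_comp (fm Y f) (eps d)) (ProHom_comp (eps d') (jD_atmor hD f)).
Proof.
  assert (JX := jobj_ok HX).
  destruct (xm (d = d')) as [e|N].
  - subst d'. rewrite (loop d f).
    eapply (L_trans LP). eapply (cgl LP). apply HY3. all: try apply HY1; try apply (jat_ok HX); try apply eps_d_ok; try apply HY2; try apply (L_idok LP); try apply HY1.
    eapply (L_trans LP). apply (L_idl LP). apply (jat_ok HX). apply HY1. apply eps_d_ok.
    apply (L_sym LP). eapply (L_trans LP). eapply (cgr LP). apply (proj1 (proj2 (proj2 JX))).
    all: try apply (jat_ok HX); try apply HY1; try apply eps_d_ok; try apply (jatmor_ok HX); try apply (L_idok LP); try apply (jat_ok HX).
    apply (L_idr LP). apply (jat_ok HX). apply HY1. apply eps_d_ok.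
  - set (g := @ubf (AA d') PP (fun b => [beta d (af d d' f b); beta d' b])).
    assert (G1 : forall b, ple PP (beta d (af d d' f b)) (g b)) by (intro; apply ubf_ge; simpl; auto).
    assert (G2 : forall b, ple PP (beta d' b) (g b)) by (intro; apply ubf_ge; simpl; auto).
    assert (HH : forall b, ple (AA d) (af d d' f b) (pi d (g b))).
    { intro b. eapply ple_trans. apply beta_ge. apply pi_mono, G1. }
    apply ub_eq. apply (jat_ok HX). apply comp_ok. apply eps_d_ok. apply HY2.
    apply comp_ok. apply (jatmor_ok HX). apply eps_d_ok.
    exists (@Build_ProHom C (jD_at hD d) (fo Y d') g
              (fun b => ccomp (pphi (fm Y f) b) (pmap (fo Y d) (pi d (g b)) (af d d' f b) (HH b)))).
    split.
    + split. exact G1. intros b h. simpl. rewrite hq_id'. unfold af in *.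
      rewrite <- ccomp_assoc. pnorm (HY1 d). apply ccomp_pmap_pi.
    + split. exact G2. intros b h. simpl. rewrite hq_id'.
      rewrite (hq_ne _ _ _ d d' f N (pi_compat1 _ d d' f N)). unfold af in *.
      rewrite <- !ccomp_assoc.
      rewrite (ccomp_assoc _ (pphi (fm Y f) _) (pmap (fo Y d') _ _ _)).
      rewrite (proj2 (HY2 _ _ f) _ _ _ (ok_mono (HY2 _ _ f) (beta_ge d' b))).
      rewrite <- !ccomp_assoc. pnorm (HY1 d). apply ccomp_pmap_pi.
Qed.

Lemma eps'_nat d d' (f : chom D d d') :
  ProHom_eq (ProHom_comp (jD_atmor hD f) (eps' d)) (ProHom_comp (eps' d') (fm Y f)).
Proof.
  assert (JX := jobj_ok HX).
  destruct (xm (d = d')) as [e|N].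
  - subst d'. rewrite (loop d f).
    eapply (L_trans LP). eapply (cgl LP). apply (proj1 (proj2 (proj2 JX))).
    all: try apply HY1; try apply (jat_ok HX); try apply eps'_d_ok; try apply (jatmor_ok HX); try apply (L_idok LP); try apply (jat_ok HX).
    eapply (L_trans LP). apply (L_idl LP). apply HY1. apply (jat_ok HX). apply eps'_d_ok.
    apply (L_sym LP). eapply (L_trans LP). eapply (cgr LP). apply HY3.
    all: try apply (jat_ok HX); try apply HY1; try apply eps'_d_ok; try apply HY2; try apply (L_idok LP); try apply HY1.
    apply (L_idr LP). apply HY1. apply (jat_ok HX). apply eps'_d_ok.
  - set (g := @ubf PP (AA d) (fun p => [sigma d p; af d d' f (sigma d' p)])).
    assert (G1 : forall p, ple (AA d) (sigma d p) (g p)) by (intro; apply ubf_ge; simpl; auto).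
    assert (G2 : forall p, ple (AA d) (af d d' f (sigma d' p)) (g p)) by (intro; apply ubf_ge; simpl; auto).
    assert (HH : forall p, ple (AA d) (af d d' f (pi d' p)) (g p)).
    { intro p. eapply ple_trans. apply (pi_compat1 p d d' f N). eapply ple_trans. apply sigma_ge. apply G1. }
    apply ub_eq. apply HY1. apply comp_ok. apply eps'_d_ok. apply (jatmor_ok HX).
    apply comp_ok. apply HY2. apply eps'_d_ok.
    exists (@Build_ProHom C (fo Y d) (jD_at hD d') g
              (fun p => ccomp (pphi (fm Y f) (pi d' p)) (pmap (fo Y d) (g p) (af d d' f (pi d' p)) (HH p)))).
    split.
    + split. exact G1. intros p h. simpl.
      rewrite (hq_ne _ _ _ d d' f N (pi_compat1 _ d d' f N)). unfold af in *.
      rewrite <- !ccomp_assoc. pnorm (HY1 d). apply ccomp_pmap_pi.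
    + split. exact G2. intros p h. simpl. unfold af in *.
      rewrite <- !ccomp_assoc.
      rewrite (ccomp_assoc _ (pphi (fm Y f) _) (pmap (fo Y d') _ _ _)).
      rewrite (proj2 (HY2 _ _ f) _ _ _ (ok_mono (HY2 _ _ f) (sigma_ge d' p))).
      rewrite <- !ccomp_assoc. pnorm (HY1 d). apply ccomp_pmap_pi.
Qed.

Lemma eps_inv1 d : ProHom_eq (ProHom_comp (eps' d) (eps d)) (ProHom_id (jD_at hD d)).
Proof.
  set (g := @ubf PP PP (fun p => [p; beta d (sigma d p)])).
  assert (G1 : forall p, ple PP p (g p)) by (intro; apply ubf_ge; simpl; auto).
  assert (G2 : forall p, ple PP (beta d (sigma d p)) (g p)) by (intro; apply ubf_ge; simpl; auto).
  apply ub_eq. apply (jat_ok HX). apply comp_ok. apply eps_d_ok. apply eps'_d_ok.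
  apply (L_idok LP). apply (jat_ok HX).
  exists (@Build_ProHom C (jD_at hD d) (jD_at hD d) g
            (fun p => pmap (fo Y d) (pi d (g p)) (pi d p) (pi_mono d _ _ (G1 p)))).
  split.
  - split. exact G2. intros p h. simpl. rewrite hq_id'. pnorm (HY1 d). apply pmap_pi.
  - split. exact G1. intros p h. simpl. rewrite hq_id', ccomp_id_l. apply pmap_pi.
Qed.

Lemma eps_inv2 d : ProHom_eq (ProHom_comp (eps d) (eps' d)) (ProHom_id (fo Y d)).
Proof.
  set (g := @ubf (AA d) (AA d) (fun a => [a; sigma d (beta d a)])).
  assert (G1 : forall a, ple (AA d) a (g a)) by (intro; apply ubf_ge; simpl; auto).
  assert (G2 : forall a, ple (AA d) (sigma d (beta d a)) (g a)) by (intro; apply ubf_ge; simpl; auto).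
  apply ub_eq. apply HY1. apply comp_ok. apply eps'_d_ok. apply eps_d_ok.
  apply (L_idok LP). apply HY1.
  exists (@Build_ProHom C (fo Y d) (fo Y d) g (fun a => pmap (fo Y d) (g a) a (G1 a))).
  split.
  - split. exact G2. intros a h. simpl. pnorm (HY1 d). apply pmap_pi.
  - split. exact G1. intros a h. simpl. rewrite ccomp_id_l. apply pmap_pi.
Qed.
End OK.
End H.

Set Implicit Arguments. Unset Strict Implicit.

Theorem corollary3p26 (C D : Cat) (HDfin : FiniteCat D) (HDsl : StronglyLoopless D) :
  IsEquivalence (ProDCat C D) (FunCat D (ProCat C))
    (@jD_obj C D) (@jD_mor C D).
Proof.
  destruct HDfin as [Hl Hh].
  destruct (constructive_indefinite_description _ Hl) as [ds Hds].
  set (homs := fun d d' => proj1_sig (constructive_indefinite_description _ (Hh d d'))).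
  assert (Hhoms : forall d d' f, In f (homs d d')).
  { intros d d' f. unfold homs. destruct (constructive_indefinite_description _ _); simpl; auto. }
  refine (Gen_equiv (ProDCat C D) (FunCat D (ProCat C)) (ProDLaws C D) (FunLaws D (ProLaws C))
            (@jD_obj C D) (@jD_mor C D) (j_functor C D) _
            (fun X Y => jfull C D ds Hds homs X Y) _
            (hD C D HDsl ds Hds homs Hhoms) _
            (eps C D HDsl ds Hds homs Hhoms) (eps' C D HDsl ds Hds homs Hhoms) _).
  - intros X Y p q HX HY Hp Hq E. apply j_faithful; eauto.
  - intros X Y g HX HY Hg. apply jfull_ok; auto.
  - intros Y HY. apply hD_ok; auto.
  - intros Y HY. split; [|split; [|split]].
    + split. intro d; apply eps_d_ok; auto. intros d d' f. apply eps_nat; auto.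
    + split. intro d; apply eps'_d_ok; auto. intros d d' f. apply eps'_nat; auto.
    + intro d. apply eps_inv1; auto.
    + intro d. apply eps_inv2; auto.
Qed.
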